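(* Let $\gamma>0$, let $\mathcal F=\{f_\vartheta:\mathcal X\to[-1,1]:\vartheta\in\Theta\}$ be a class of functions with parameter space $\Theta$, $\mathcal D$ a probability distribution over $\mathcal X$ and $\mu$ a probability measure over $\Theta$. For $\phi,\vartheta\in\Theta$ let $l^\phi(\vartheta)=\frac12\mathbb E_{x\sim\mathcal D}[(f_\phi(x)-f_\vartheta(x))^2]$. Then for every $\vartheta\in\Theta$, $$\mathrm{Var}_{\phi\sim\mu}[l^\phi(\vartheta)]\le4\sqrt{\mathrm{Var}_{\phi\sim\mu}[f_\phi]}\le4\sqrt{\mathbb E_{\phi\sim\mu,\,x\sim\mathcal D}[f_\phi(x)^2]},$$ where $\mathrm{Var}_{\phi\sim\mu}[f_\phi]=\mathbb E_{\phi\sim\mu}[\langle f_\phi,f_\phi\rangle_{\mathcal D}]-\langle\mathbb E_{\phi\sim\mu}[f_\phi],\mathbb E_{\phi\sim\mu}[f_\phi]\rangle_{\mathcal D}$.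
   Context: $\langle f,g\rangle_{\mathcal D}=\mathbb E_{x\sim\mathcal D}[f(x)g(x)]$ is the $L^2(\mathcal D)$ inner product; $\mathbb E_{\phi\sim\mu}[f_\phi]$ denotes the pointwise mean function $x\mapsto\mathbb E_{\phi\sim\mu}[f_\phi(x)]$. *)

(* Defs.v *)
From HB Require Import structures.
From mathcomp Require Import all_boot all_order all_algebra.
From mathcomp Require Import all_classical all_reals all_analysis.
Set Implicit Arguments. Unset Strict Implicit. Unset Printing Implicit Defensive.
Import Order.TTheory GRing.Theory Num.Theory.
Local Open Scope classical_set_scope.
Local Open Scope ring_scope.

Section defs.
Context {R : realType}.

Definition Ex {d} {T : measurableType d} (P : probability T R) (g : T -> R) : R :=
  Rintegral P setT g.

Definition VarR {d} {T : measurableType d} (P : probability T R) (g : T -> R) : R :=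
  Ex P (fun t => g t ^+ 2) - (Ex P g) ^+ 2.

Definition innerD {d} {X : measurableType d} (D : probability X R) (g h : X -> R) : R :=
  Ex D (fun x => g x * h x).

Definition meanf {d1 d2} {Th : measurableType d1} {X : measurableType d2}
  (mu : probability Th R) (f : Th -> X -> R) : X -> R :=
  fun x => Ex mu (fun phi => f phi x).

Definition VarF {d1 d2} {Th : measurableType d1} {X : measurableType d2}
  (mu : probability Th R) (D : probability X R) (f : Th -> X -> R) : R :=
  Ex mu (fun phi => innerD D (f phi) (f phi)) - innerD D (meanf mu f) (meanf mu f).

Definition lossl {d1 d2} {Th : measurableType d1} {X : measurableType d2}
  (D : probability X R) (f : Th -> X -> R) (phi theta : Th) : R :=
  2^-1 * Ex D (fun x => (f phi x - f theta x) ^+ 2).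
End defs.

(* Main.v *)
Require Import Defs.
From HB Require Import structures.
From mathcomp Require Import all_boot all_order all_algebra.
From mathcomp Require Import all_classical all_reals all_analysis.
From mathcomp Require Import measurable_realfun lebesgue_integral_theory.lebesgue_integral_fubini.
From mathcomp Require Import ring lra.
Import Order.TTheory GRing.Theory Num.Theory.
Import numFieldNormedType.Exports.
Local Open Scope classical_set_scope.
Local Open Scope ring_scope.

Section H.
Context {R : realType}.

Lemma int_bd d (T : measurableType d) (P : probability T R) (h : T -> R) (M : R) :
  measurable_fun setT h -> (forall x, `|h x| <= M) -> P.-integrable setT (EFin \o h).
Proof.
move=> mh hM; apply: measurable_bounded_integrable => //.
  by rewrite -ge0_fin_numE // fin_num_measure.
exists M; split; first exact: num_real.
move=> y My x _; apply: le_trans (hM x) _; exact: ltW.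
Qed.

Lemma Ex_le d (T : measurableType d) (P : probability T R) (h1 h2 : T -> R) (M : R) :
  measurable_fun setT h1 -> measurable_fun setT h2 ->
  (forall x, `|h1 x| <= M) -> (forall x, `|h2 x| <= M) ->
  (forall x, h1 x <= h2 x) -> Ex P h1 <= Ex P h2.
Proof.
move=> m1 m2 b1 b2 h12; apply: le_Rintegral => //; exact: int_bd.
Qed.

Lemma Ex_cst d (T : measurableType d) (P : probability T R) (r : R) :
  Ex P (fun _ => r) = r.
Proof.
rewrite /Ex Rintegral_cst //; set e := (X in fine X).
have -> : e = 1%E by exact: probability_setT.
by rewrite mulr1.
Qed.

Context d1 d2 (T : measurableType d1) (X : measurableType d2).
Variables (mu : probability T R) (D : probability X R).

Lemma prod_int (F : T * X -> R) (M : R) : measurable_fun setT F ->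
  (forall z, `|F z| <= M) -> (mu \x D)%E.-integrable setT (EFin \o F).
Proof. move=> mF FM; exact: (@int_bd _ _ (mu \x D)%E _ M mF FM). Qed.

Lemma meas_secD (F : T * X -> R) (M : R) : measurable_fun setT F ->
  (forall z, `|F z| <= M) -> measurable_fun setT (fun t => Ex D (fun x => F (t, x))).
Proof.
move=> mF FM; rewrite /Ex /Rintegral.
have H := measurable_fubini_F (m1 := mu) (m2 := D) (f := EFin \o F) (prod_int _ _ mF FM).
have mfine : measurable_fun [set: \bar R] (fine : \bar R -> R) by apply: fine_measurable. exact: (measurableT_comp mfine H).
Qed.

Lemma meas_secM (F : T * X -> R) (M : R) : measurable_fun setT F ->
  (forall z, `|F z| <= M) -> measurable_fun setT (fun x => Ex mu (fun t => F (t, x))).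
Proof.
move=> mF FM; rewrite /Ex /Rintegral.
have H := measurable_fubini_G (m1 := mu) (m2 := D) (f := EFin \o F) (prod_int _ _ mF FM).
have mfine : measurable_fun [set: \bar R] (fine : \bar R -> R) by apply: fine_measurable.
exact: (measurableT_comp mfine H).
Qed.

Lemma Ex_fubini (F : T * X -> R) (M : R) : measurable_fun setT F ->
  (forall z, `|F z| <= M) ->
  Ex mu (fun t => Ex D (fun x => F (t, x))) = Ex D (fun x => Ex mu (fun t => F (t, x))).
Proof.
move=> mF FM.
have iF := prod_int _ _ mF FM.
have := Fubini iF.
rewrite /Ex /Rintegral => E.
congr fine.
transitivity (\int[mu]_x \int[D]_y (EFin \o F) (x, y))%E.
  apply: eq_integral => t _; rewrite fineK //.
  apply: integrable_fin_num => //; apply: (@int_bd _ _ _ _ M).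
    exact: measurableT_comp.
  by move=> x; exact: FM.
rewrite E; apply: eq_integral => x _; rewrite fineK //.
apply: integrable_fin_num => //; apply: (@int_bd _ _ _ _ M).
  exact: measurableT_comp.
by move=> t; exact: FM.
Qed.
End H.

Section H2.
Context {R : realType} d (T : measurableType d) (P : probability T R).
Implicit Types (u v : T -> R) (M : R).

Lemma Ex_ext u v : (forall t, u t = v t) -> Ex P u = Ex P v.
Proof. by move=> h; rewrite (funext h). Qed.

Lemma ExD u v M : measurable_fun setT u -> measurable_fun setT v ->
  (forall t, `|u t| <= M) -> (forall t, `|v t| <= M) ->
  Ex P (fun t => u t + v t) = Ex P u + Ex P v.
Proof. by move=> mu mv bu bv; apply: RintegralD => //; exact: int_bd. Qed.

Lemma ExB u v M : measurable_fun setT u -> measurable_fun setT v ->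
  (forall t, `|u t| <= M) -> (forall t, `|v t| <= M) ->
  Ex P (fun t => u t - v t) = Ex P u - Ex P v.
Proof. by move=> mu mv bu bv; apply: RintegralB => //; exact: int_bd. Qed.

Lemma ExZl u M r : measurable_fun setT u -> (forall t, `|u t| <= M) ->
  Ex P (fun t => r * u t) = r * Ex P u.
Proof. by move=> mu bu; apply: RintegralZl => //; exact: int_bd. Qed.

Lemma ExZr u M r : measurable_fun setT u -> (forall t, `|u t| <= M) ->
  Ex P (fun t => u t * r) = Ex P u * r.
Proof. by move=> mu bu; apply: RintegralZr => //; exact: int_bd. Qed.

Lemma Ex_ge0 u : (forall t, 0 <= u t) -> 0 <= Ex P u.
Proof. by move=> h; apply: Rintegral_ge0 => t _. Qed.

Lemma Ex_norm u M : measurable_fun setT u -> (forall t, `|u t| <= M) ->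
  `|Ex P u| <= Ex P (fun t => `|u t|).
Proof. by move=> mu bu; apply: le_normr_Rintegral => //; exact: int_bd. Qed.

Lemma var_le u c M : measurable_fun setT u -> (forall t, `|u t| <= M) ->
  VarR P u <= Ex P (fun t => (u t - c) ^+ 2).
Proof.
move=> mu bu.
have M0 : 0 <= M by apply: le_trans (bu point) ; rewrite normr_ge0.
have mu2 : measurable_fun setT (fun t => u t ^+ 2) by exact: measurable_funX.
have bu2 : forall t, `|u t ^+ 2| <= M * M.
  by move=> t; rewrite normrX expr2 ler_pM.
have mcu : measurable_fun setT (fun t => (2 * c) * u t).
  by apply: measurable_funM => //; exact: measurable_cst.
have bcu : forall t, `|(2 * c) * u t| <= `|2 * c| * M.
  by move=> t; rewrite normrM ler_wpM2l.
rewrite (@Ex_ext _ (fun t => (u t ^+ 2 - (2 * c) * u t) + c ^+ 2)); last first.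
  by move=> t; ring.
rewrite (@ExD _ _ (M * M + `|2 * c| * M + c ^+ 2 + `|c ^+ 2|)); last 4 first.
- by apply: measurable_funB.
- exact: measurable_cst.
- move=> t; apply: le_trans (ler_normB _ _) _.
  have := bu2 t; have := bcu t; have := normr_ge0 (c ^+ 2); have := sqr_ge0 c; lra.
- move=> t; have := mulr_ge0 M0 M0; have := mulr_ge0 (normr_ge0 (2 * c)) M0.
  have := sqr_ge0 c; lra.
rewrite (@ExB _ _ (M * M + `|2 * c| * M)) //; last 2 first.
- move=> t; have := bu2 t; have := mulr_ge0 (normr_ge0 (2 * c)) M0; lra.
- move=> t; have := bcu t; have := mulr_ge0 M0 M0; lra.
rewrite (ExZl _ _ _ mu bu) Ex_cst /VarR.
have := sqr_ge0 (Ex P u - c); nra.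
Qed.
End H2.

Section H3.
Context {R : realType}.

Lemma amgm (h s : R) : 0 < s -> 2 * `|h| <= h ^+ 2 / s + s.
Proof.
move=> s0.
have E : h ^+ 2 / s + s - 2 * `|h| = (`|h| - s) ^+ 2 / s.
  rewrite -[h ^+ 2](real_normK (num_real h)); field; exact: lt0r_neq0.
rewrite -subr_ge0 E; apply: divr_ge0; [exact: sqr_ge0 | exact: ltW].
Qed.

Lemma keyineq (a b t s : R) : `|a| <= 1 -> `|b| <= 1 -> `|t| <= 1 -> 0 < s ->
  `|(a - t) ^+ 2 - (b - t) ^+ 2| <= 2 * ((a - b) ^+ 2 / s + s).
Proof.
move=> ha hb ht s0.
have -> : (a - t) ^+ 2 - (b - t) ^+ 2 = (a - b) * (a + b - 2 * t) by ring.
rewrite normrM.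
have h4 : `|a + b - 2 * t| <= 4.
  move: ha hb ht; rewrite !ler_norml => /andP[? ?] /andP[? ?] /andP[? ?].
  apply/andP; split; lra.
apply: (le_trans (ler_wpM2l (normr_ge0 _) h4)).
have := amgm (a - b) _ s0; lra.
Qed.

Lemma final (V W : R) : 0 <= V -> (forall s, 0 < s -> W <= 2 * (V / s + s)) ->
  W <= 4 * Num.sqrt V.
Proof.
move=> V0 h.
have [Vp|] := ltP 0 V.
  have sp : 0 < Num.sqrt V by rewrite sqrtr_gt0.
  have := h _ sp.
  have -> : V / Num.sqrt V = Num.sqrt V.
    rewrite -{1}(sqr_sqrtr V0) expr2 -mulrA divff ?mulr1 //; exact: lt0r_neq0.
  lra.
move=> V0'; have V00 : V = 0 by apply/eqP; rewrite eq_le V0' V0.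
rewrite V00 sqrtr0 mulr0.
have [//|Wp] := leP W 0.
have := h (W / 4) (divr_gt0 Wp (ltr0n _ 4)).
rewrite V00 mul0r add0r; lra.
Qed.

Context d (T : measurableType d) (P : probability T R).

Lemma Ex_bd (u : T -> R) (M : R) : measurable_fun setT u -> (forall t, `|u t| <= M) ->
  `|Ex P u| <= M.
Proof.
move=> mu bu.
have M0 : 0 <= M by apply: le_trans (bu point) ; rewrite normr_ge0.
apply: (le_trans (@Ex_norm _ _ _ P _ _ mu bu)).
rewrite -[leRHS](@Ex_cst _ _ _ P M); apply: (@Ex_le _ _ _ P _ _ M) => //.
- exact: measurableT_comp.
- by move=> t; rewrite normr_id.
- by move=> t; rewrite ger0_norm.
Qed.

Lemma Ex_lin (u : T -> R) (M s : R) : 0 < s -> measurable_fun setT u -> (forall t, `|u t| <= M) ->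
  Ex P (fun t => 2 * (u t / s + s)) = 2 * (Ex P u / s + s).
Proof.
move=> s0 mu bu.
have M0 : 0 <= M by apply: le_trans (bu point) ; rewrite normr_ge0.
rewrite (@Ex_ext _ _ _ P _ (fun t => u t * (2 / s) + 2 * s)); last by move=> t; ring.
have bu' : forall t, `|u t * (2 / s)| <= M * `|2 / s| + `|2 * s|.
  move=> t; rewrite normrM; have := ler_wpM2r (normr_ge0 (2 / s)) (bu t).
  have := normr_ge0 (2 * s); lra.
rewrite (@ExD _ _ _ P _ _ (M * `|2 / s| + `|2 * s|)) //.
all: try (move=> t; have := mulr_ge0 M0 (normr_ge0 (2 / s)); lra).
all: try exact: measurable_cst.
all: try exact: (measurable_funM mu (measurable_cst (2 / s))).

rewrite (@ExZr _ _ _ P _ M) // Ex_cst; field; exact: lt0r_neq0.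
Qed.
End H3.

Theorem mainTheorem14 (R : realType) (gamma : R) (d1 d2 : measure_display)
  (Theta : measurableType d1) (X : measurableType d2)
  (f : Theta -> X -> R) (D : probability X R) (mu : probability Theta R) :
  0 < gamma ->
  measurable_fun [set: Theta * X] (fun z => f z.1 z.2) ->
  (forall phi x, -1 <= f phi x <= 1) ->
  forall theta : Theta,
    VarR mu (fun phi => lossl D f phi theta) <= 4 * Num.sqrt (VarF mu D f) /\
    4 * Num.sqrt (VarF mu D f)
      <= 4 * Num.sqrt (Ex mu (fun phi => Ex D (fun x => f phi x ^+ 2))).
Proof.
move=> _ mf fb1 theta.
pose fz := fun z : Theta * X => f z.1 z.2.
have fb : forall phi x, `|f phi x| <= 1 by move=> p x; rewrite ler_norml; exact: fb1.
have fzb : forall z, `|fz z| <= 1 by move=> z; exact: fb.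
have mphi : forall phi, measurable_fun setT (f phi).
  by move=> phi; exact: (measurableT_comp mf (pair1_measurable phi)).
have mx : forall x, measurable_fun setT (fun phi => f phi x).
  by move=> x; exact: (measurable_fun_pair1 x mf).
pose m := meanf mu f.
have mm : measurable_fun setT m := @meas_secM _ _ _ _ _ mu D fz 1 mf fzb.
have mb : forall x, `|m x| <= 1.
  move=> x; exact: (@Ex_bd _ _ _ mu _ 1 (mx x) (fun phi => fb phi x)).
have mft2 : measurable_fun setT (fun z : Theta * X => f theta z.2).
  exact: (measurableT_comp (mphi theta) measurable_snd).
have mm2 : measurable_fun setT (fun z : Theta * X => m z.2).
  exact: (measurableT_comp mm measurable_snd).
pose G1 := fun z : Theta * X => (fz z - f theta z.2) ^+ 2.
have mG1 : measurable_fun setT G1 by apply: measurable_funX; exact: measurable_funB.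
have bG1 : forall z, `|G1 z| <= 4.
  move=> z; have := fzb z; have := fb theta z.2; rewrite /G1 !ler_norml.
  move=> /andP[? ?] /andP[? ?]; apply/andP; split; nra.
pose H1 := fun z : Theta * X => (fz z - m z.2) ^+ 2.
have mH1 : measurable_fun setT H1 by apply: measurable_funX; exact: measurable_funB.
have bH1 : forall z, `|H1 z| <= 4.
  move=> z; have := fzb z; have := mb z.2; rewrite /H1 !ler_norml.
  move=> /andP[? ?] /andP[? ?]; apply/andP; split; nra.
pose K := fun x => (m x - f theta x) ^+ 2.
have mK : measurable_fun setT K by apply: measurable_funX; exact: measurable_funB.
have bK : forall x, `|K x| <= 4.
  move=> x; have := mb x; have := fb theta x; rewrite /K !ler_norml.
  move=> /andP[? ?] /andP[? ?]; apply/andP; split; nra.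
pose g := fun phi => lossl D f phi theta.
pose Hh := fun phi => Ex D (fun x => H1 (phi, x)).
pose c := 2^-1 * Ex D K.
have mg : measurable_fun setT g.
  exact: (measurable_funM (measurable_cst _) (@meas_secD _ _ _ _ _ mu D G1 4 mG1 bG1)).
have mHh : measurable_fun setT Hh := @meas_secD _ _ _ _ _ mu D H1 4 mH1 bH1.
have mG1p : forall phi, measurable_fun setT (fun x => G1 (phi, x)).
  by move=> phi; exact: (measurableT_comp mG1 (pair1_measurable phi)).
have mH1p : forall phi, measurable_fun setT (fun x => H1 (phi, x)).
  by move=> phi; exact: (measurableT_comp mH1 (pair1_measurable phi)).
have gr : forall phi, 0 <= g phi <= 2.
  move=> phi; have := @Ex_bd _ _ _ D _ 4 (mG1p phi) (fun x => bG1 (phi, x)).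
  have := @Ex_ge0 _ _ _ D (fun x => G1 (phi, x)) (fun x => sqr_ge0 _).
  rewrite /g /lossl ler_norml => ? /andP[? ?]; apply/andP; split; lra.
have cr : 0 <= c <= 2.
  have := @Ex_bd _ _ _ D _ 4 mK bK.
  have := @Ex_ge0 _ _ _ D K (fun x => sqr_ge0 _).
  rewrite /c ler_norml => ? /andP[? ?]; apply/andP; split; lra.
have gb : forall phi, `|g phi| <= 2.
  by move=> phi; have /andP[? ?] := gr phi; rewrite ger0_norm.
have Hhr : forall phi, 0 <= Hh phi <= 4.
  move=> phi; have := @Ex_bd _ _ _ D _ 4 (mH1p phi) (fun x => bH1 (phi, x)).
  have := @Ex_ge0 _ _ _ D (fun x => H1 (phi, x)) (fun x => sqr_ge0 _).
  rewrite /Hh ler_norml => ? /andP[? ?]; apply/andP; split; lra.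
have key : forall s, 0 < s -> forall phi, (g phi - c) ^+ 2 <= 2 * (Hh phi / s + s).
  move=> s s0 phi.
  have e : g phi - c = 2^-1 * Ex D (fun x => G1 (phi, x) - K x).
    by rewrite (@ExB _ _ _ D (fun x => G1 (phi, x)) K 4) ?mulrBr.
  have bGK : forall x, `|G1 (phi, x) - K x| <= 8.
    move=> x; apply: le_trans (ler_normB _ _) _; have := bG1 (phi, x); have := bK x; lra.
  have mGK : measurable_fun setT (fun x => G1 (phi, x) - K x) by exact: measurable_funB.
  have n1 := @Ex_norm _ _ _ D _ 8 mGK bGK.
  have n2 : Ex D (fun x => `|G1 (phi, x) - K x|) <= Ex D (fun x => 2 * (H1 (phi, x) / s + s)).
    apply: (@Ex_le _ _ _ D _ _ (8 + 2 * (4 / s + s))).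
    - exact: measurableT_comp.
    - apply: measurable_funM; first exact: measurable_cst.
      apply: measurable_funD; last exact: measurable_cst.
      exact: (measurable_funM (mH1p phi) (measurable_cst _)).
    - move=> x; rewrite normr_id; have := bGK x.
      have := mulr_ge0 (ltW (ltr0n R 2)) (addr_ge0 (divr_ge0 (ler0n R 4) (ltW s0)) (ltW s0)).
      lra.
    - move=> x; have H0 : 0 <= H1 (phi, x) by exact: sqr_ge0.
      have H4 : H1 (phi, x) <= 4 by have := bH1 (phi, x); rewrite ger0_norm.
      have : H1 (phi, x) / s <= 4 / s by rewrite ler_wpM2r // invr_ge0 ltW.
      have := divr_ge0 H0 (ltW s0).
      move=> ? ?; rewrite ger0_norm; [lra | nra].
    - move=> x; exact: (keyineq _ _ _ _ (fb phi x) (mb x) (fb theta x) s0).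
  rewrite (@Ex_lin _ _ _ D _ 4 s s0 (mH1p phi) (fun x => bH1 (phi, x))) in n2.
  have le1 : `|g phi - c| <= Hh phi / s + s.
    rewrite e normrM ger0_norm; last by rewrite invr_ge0.
    rewrite /Hh; lra.
  have /andP[? ?] := gr phi; have /andP[? ?] := cr.
  have l2 : `|g phi - c| <= 2.
    rewrite ler_norml; apply/andP; split; lra.
  rewrite -(real_normK (num_real (g phi - c))).
  have := normr_ge0 (g phi - c); nra.
have var1 := @var_le _ _ _ mu g c 2 mg gb.
have Hhb : forall phi, `|Hh phi| <= 4.
  by move=> phi; have /andP[? ?] := Hhr phi; rewrite ger0_norm.
have bnd : forall s, 0 < s -> VarR mu g <= 2 * (Ex mu Hh / s + s).
  move=> s s0; apply: (le_trans var1).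
  rewrite -(@Ex_lin _ _ _ mu _ 4 s s0 mHh Hhb).
  apply: (@Ex_le _ _ _ mu _ _ (16 + 2 * (4 / s + s))).
  - apply: measurable_funX; apply: measurable_funB => //; exact: measurable_cst.
  - apply: measurable_funM; first exact: measurable_cst.
    apply: measurable_funD; last exact: measurable_cst.
    exact: (measurable_funM mHh (measurable_cst _)).
  - move=> phi; have /andP[? ?] := gr phi; have /andP[? ?] := cr.
    have := mulr_ge0 (ltW (ltr0n R 2)) (addr_ge0 (divr_ge0 (ler0n R 4) (ltW s0)) (ltW s0)).
    rewrite ger0_norm; [nra | exact: sqr_ge0].
  - move=> phi; have /andP[H0 H4] := Hhr phi.
    have : Hh phi / s <= 4 / s by rewrite ler_wpM2r // invr_ge0 ltW.
    have := divr_ge0 H0 (ltW s0).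
    move=> ? ?; rewrite ger0_norm; [lra | nra].
  - by move=> phi; exact: key.
pose A1 := fun z : Theta * X => fz z * fz z.
pose B1 := fun z : Theta * X => fz z * m z.2.
have mA1 : measurable_fun setT A1 by exact: measurable_funM.
have mB1 : measurable_fun setT B1 by exact: measurable_funM.
have bA1 : forall z, `|A1 z| <= 1.
  by move=> z; rewrite /A1 normrM -[1]mulr1 ler_pM.
have bB1 : forall z, `|B1 z| <= 1.
  by move=> z; rewrite /B1 normrM -[1]mulr1 ler_pM.
pose EA := fun phi => Ex D (fun x => A1 (phi, x)).
pose EB := fun phi => Ex D (fun x => B1 (phi, x)).
pose MM := Ex D (fun x => m x * m x).
have mEA : measurable_fun setT EA := @meas_secD _ _ _ _ _ mu D A1 1 mA1 bA1.
have mEB : measurable_fun setT EB := @meas_secD _ _ _ _ _ mu D B1 1 mB1 bB1.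
have mA1p : forall phi, measurable_fun setT (fun x => A1 (phi, x)).
  by move=> phi; exact: (measurableT_comp mA1 (pair1_measurable phi)).
have mB1p : forall phi, measurable_fun setT (fun x => B1 (phi, x)).
  by move=> phi; exact: (measurableT_comp mB1 (pair1_measurable phi)).
have bEA : forall phi, `|EA phi| <= 1.
  by move=> phi; exact: (@Ex_bd _ _ _ D _ 1 (mA1p phi) (fun x => bA1 (phi, x))).
have bEB : forall phi, `|EB phi| <= 1.
  by move=> phi; exact: (@Ex_bd _ _ _ D _ 1 (mB1p phi) (fun x => bB1 (phi, x))).
have mmm : measurable_fun setT (fun x => m x * m x) by exact: measurable_funM.
have bmm : forall x, `|m x * m x| <= 1.
  by move=> x; rewrite normrM -[1]mulr1 ler_pM.
have hHh : forall phi, Hh phi = EA phi - 2 * EB phi + MM.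
  move=> phi; rewrite /Hh.
  rewrite (@Ex_ext _ _ _ D _ (fun x => (A1 (phi, x) - 2 * B1 (phi, x)) + m x * m x));
    last by move=> x; rewrite /H1 /A1 /B1; ring.
  have m2B : measurable_fun setT (fun x => 2 * B1 (phi, x)).
    exact: (measurable_funM (measurable_cst _) (mB1p phi)).
  have b2B : forall x, `|2 * B1 (phi, x)| <= 2.
    move=> x; rewrite normrM ger0_norm // -[2 in leRHS]mulr1.
    by rewrite ler_wpM2l // bB1.
  rewrite (@ExD _ _ _ D _ _ 4); last 4 first.
  - exact: measurable_funB.
  - exact: mmm.
  - move=> x; apply: le_trans (ler_normB _ _) _.
    have := bA1 (phi, x); have := b2B x; lra.
  - move=> x; have := bmm x; lra.
  rewrite (@ExB _ _ _ D _ _ 2) //; last first.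
    move=> x; have := bA1 (phi, x); lra.
  by rewrite (@ExZl _ _ _ D _ 1).
have EHh : Ex mu Hh = Ex mu EA - 2 * Ex mu EB + MM.
  rewrite (@Ex_ext _ _ _ mu _ _ hHh).
  have m2B : measurable_fun setT (fun phi => 2 * EB phi).
    exact: (measurable_funM (measurable_cst _) mEB).
  have b2B : forall phi, `|2 * EB phi| <= 2.
    move=> phi; rewrite normrM ger0_norm // -[2 in leRHS]mulr1.
    by rewrite ler_wpM2l // bEB.
  rewrite (@ExD _ _ _ mu _ _ 4); last 4 first.
  - exact: measurable_funB.
  - exact: measurable_cst.
  - move=> phi; apply: le_trans (ler_normB _ _) _.
    have := bEA phi; have := b2B phi; lra.
  - move=> phi; have := normr_ge0 MM; have := @Ex_bd _ _ _ D _ 1 mmm bmm; rewrite /MM; lra.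
  rewrite (@ExB _ _ _ mu _ _ 2) //; last first.
    move=> phi; have := bEA phi; lra.
  by rewrite (@ExZl _ _ _ mu _ 1) // Ex_cst.
have fub : Ex mu EB = MM.
  rewrite /EB (@Ex_fubini _ _ _ _ _ mu D B1 1 mB1 bB1) /MM.
  apply: Ex_ext => x.
  exact: (@ExZr _ _ _ mu (fun phi => f phi x) 1 (m x) (mx x) (fun phi => fb phi x)).
have VF : VarF mu D f = Ex mu EA - MM by [].
have EHhV : Ex mu Hh = VarF mu D f by rewrite EHh fub VF; ring.
split.
  apply: (@final _ (VarF mu D f)); first by rewrite -EHhV; apply: Ex_ge0 => phi; have /andP[] := Hhr phi.
  by move=> s s0; rewrite -EHhV; exact: bnd.
rewrite ler_wpM2l // ler_sqrt; last first.
  by apply: Ex_ge0 => phi; apply: Ex_ge0 => x; exact: sqr_ge0.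
have -> : Ex mu (fun phi => Ex D (fun x => f phi x ^+ 2)) = Ex mu EA.
  by apply: Ex_ext => phi; apply: Ex_ext => x; rewrite expr2.
rewrite VF; have : 0 <= MM by apply: Ex_ge0 => x; rewrite -expr2; exact: sqr_ge0.
lra.
Qed.
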